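(* Let $K=\mathbb{C}_p$, let $F=(F_1,\dots,F_N):\mathbb{A}^N_K\to\mathbb{A}^N_K$ be a lift of $p$-th power, and let $\varpi\in K^\circ$ with $|p|\le|\varpi|<1$. Assume that for each $i$, \[F_i=G_i^p+\varpi f_i,\] where $f_i\in K^\circ[X_1,\dots,X_N]$ has degree smaller than the degree of $G_i^p$, and $G_i$ is of the form \[G_i(X_1,\dots,X_N)=\sum_{j=1}^{m_i}c_{i,j}X_i^{q_{i,j}}\] with $c_{i,j}\in K^\circ\setminus K^{\circ\circ}$, $m_i\in\mathbb{N}$, and each $q_{i,j}$ a power of $p$ with $q_{i,j}>q_{i,j'}$ whenever $j>j'$. Then $F$ is a restricted lift of $p$-th power.
   Context: $K=\mathbb{C}_p$ with absolute value $|\cdot|$, valuation ring $K^\circ=\{|x|\le1\}$ and maximal ideal $K^{\circ\circ}=\{|x|<1\}$. For $X=(X_1,\dots,X_N)$ write $\|X\|=\max_i|X_i|$. A morphism $F=(F_1,\dots,F_N)$ with $F_i\in K^\circ[X_1,\dots,X_N]$ is a lift of $p$-th power if there exist $\varpi\in K^\circ$ with $|p|\le|\varpi|<1$ and $G_i\in K^\circ[X_1,\dots,X_N]$ with $F_i\equiv G_i^p\pmod{\varpi}$ for all $i$; it is a restricted lift of $p$-th power if moreover $F$ maps $K^N\setminus(K^\circ)^N$ into $K^N\setminus(K^\circ)^N$ and $\|F(x)\|>\|x\|$ for all $x\in K^N\setminus(K^\circ)^N$. *)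

(* Defs.v *)
From HB Require Import structures.
From mathcomp Require Import all_boot all_order all_algebra all_field.
From mathcomp Require Export mpoly.
Set Implicit Arguments. Unset Strict Implicit. Unset Printing Implicit Defensive.
Import Order.TTheory GRing.Theory Num.Theory.
Local Open Scope ring_scope.

Section Defs.
Variables (R : realFieldType) (K : closedFieldType) (abs : K -> R).

(* Axioms of a field K playing the role of C_p: an algebraically closed field
   of characteristic 0 with a complete non-archimedean absolute value
   normalised by |p| = 1/p. *)
Definition cauchy_seq (u : nat -> K) :=
  forall e : R, 0 < e -> exists n0, forall m n, (n0 <= m)%N -> (n0 <= n)%N ->
    abs (u m - u n) < e.
Definition converges_to (u : nat -> K) (l : K) :=
  forall e : R, 0 < e -> exists n0, forall n, (n0 <= n)%N -> abs (u n - l) < e.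

Definition Cp_model (p : nat) :=
  (forall x, abs x = 0 <-> x = 0) /\
  (forall x, 0 <= abs x) /\
  (forall x y, abs (x * y) = abs x * abs y) /\
  (forall x y, abs (x + y) <= Num.max (abs x) (abs y)) /\
  (forall n : nat, (0 < n)%N -> n%:R != 0 :> K) /\
  abs p%:R = (p%:R)^-1 /\
  (forall u, cauchy_seq u -> exists l, converges_to u l).

Definition in_Ko (x : K) := abs x <= 1.
Definition in_Ko_not_Koo (x : K) := abs x <= 1 /\ ~ (abs x < 1).

Variable N : nat.

Definition poly_over_Ko (P : {mpoly K[N]}) := forall m, in_Ko (P@_m).

Definition cong_mod (w : K) (P Q : {mpoly K[N]}) :=
  exists H, poly_over_Ko H /\ P - Q = w *: H.

Definition vnorm (x : 'I_N -> K) : R := \big[Num.max/0]_(i < N) abs (x i).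

Definition in_Ko_N (x : 'I_N -> K) := forall i, in_Ko (x i).

Definition eval_map (F : 'I_N -> {mpoly K[N]}) (x : 'I_N -> K) : 'I_N -> K :=
  fun i => (F i).@[x].

Definition lift_of_pth_power (p : nat) (F : 'I_N -> {mpoly K[N]}) :=
  (forall i, poly_over_Ko (F i)) /\
  exists w : K, [/\ in_Ko w, abs p%:R <= abs w, abs w < 1 &
    exists G : 'I_N -> {mpoly K[N]},
      forall i, poly_over_Ko (G i) /\ cong_mod w (F i) (G i ^+ p)].

Definition restricted_lift_of_pth_power (p : nat) (F : 'I_N -> {mpoly K[N]}) :=
  lift_of_pth_power p F /\
  forall x : 'I_N -> K, ~ in_Ko_N x ->
    ~ in_Ko_N (eval_map F x) /\ vnorm x < vnorm (eval_map F x).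

End Defs.

(* Main.v *)
Require Import Defs.
From HB Require Import structures.
From mathcomp Require Import all_boot all_order all_algebra all_field.
From mathcomp Require Import mpoly.
From mathcomp Require Import ring lra zify.
Import Order.TTheory GRing.Theory Num.Theory.
Local Open Scope ring_scope.

Section Abs.
Variables (R : realFieldType) (K : fieldType) (abs : K -> R).
Hypotheses (h0 : forall x, abs x = 0 <-> x = 0) (hge : forall x, 0 <= abs x)
  (hM : forall x y, abs (x * y) = abs x * abs y)
  (hU : forall x y, abs (x + y) <= Num.max (abs x) (abs y)).

Lemma abs0 : abs 0 = 0. Proof. by apply/h0. Qed.

Lemma abs1 : abs 1 = 1.
Proof.
have e : abs 1 * abs 1 = abs 1 by rewrite -hM mulr1.
have nz : abs 1 != 0 by apply/eqP => /h0 /eqP; rewrite oner_eq0.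
by apply: (mulIf nz); rewrite e mul1r.
Qed.

Lemma absN x : abs (- x) = abs x.
Proof.
have e : abs (-1) * abs (-1) = 1 by rewrite -hM mulrNN mulr1 abs1.
have g := hge (-1).
have e1 : abs (-1) = 1 by nra.
by rewrite -mulN1r hM e1 mul1r.
Qed.

Lemma absX x n : abs (x ^+ n) = abs x ^+ n.
Proof. by elim: n => [|n IH]; rewrite ?expr0 ?abs1 // !exprS hM IH. Qed.

Lemma abs_dom a b : abs b < abs a -> abs (a + b) = abs a.
Proof.
move=> hba; apply/eqP; rewrite eq_le; apply/andP; split.
  by apply: le_trans (hU a b) _; rewrite ge_max lexx ltW.
have := hU (a + b) (- b); rewrite addrK absN le_max => /orP [] // h.
by move: (lt_le_trans hba h); rewrite ltxx.
Qed.

Lemma abs_sum_le (I : Type) (r : seq I) (P : pred I) (F : I -> K) B :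
  0 <= B -> (forall i, P i -> abs (F i) <= B) ->
  abs (\sum_(i <- r | P i) F i) <= B.
Proof.
move=> hB hF; apply: (big_ind (fun y => abs y <= B)) => //.
  by rewrite abs0.
by move=> x y hx hy; apply: le_trans (hU x y) _; rewrite ge_max hx hy.
Qed.

Lemma abs_prod (I : Type) (r : seq I) (P : pred I) (F : I -> K) :
  abs (\prod_(i <- r | P i) F i) = \prod_(i <- r | P i) abs (F i).
Proof. exact: (big_morph abs hM abs1). Qed.

End Abs.

Section VN.
Variables (R : realFieldType) (I : eqType) (g : I -> R).

Lemma bigmax_ge (s : seq I) i : (forall j, 0 <= g j) -> i \in s ->
  g i <= \big[Num.max/0]_(j <- s) g j.
Proof.
move=> hg; elim: s => // a s IH; rewrite inE big_cons le_max => /orP [/eqP ->|h].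
  by rewrite lexx.
by rewrite IH // orbT.
Qed.

Lemma bigmax_ex (s : seq I) : \big[Num.max/0]_(j <- s) g j = 0 \/
  exists2 i, i \in s & \big[Num.max/0]_(j <- s) g j = g i.
Proof.
elim: s => [|a s IH]; first by rewrite big_nil; left.
rewrite big_cons.
case: (leP (\big[Num.max/0]_(j <- s) g j) (g a)) => h.
  by right; exists a; rewrite ?mem_head.

case: IH => [e|[i hi e]]; first by left.
by right; exists i; rewrite ?inE ?hi ?orbT.
Qed.
End VN.

Lemma msizeXn (n : nat) (K : idomainType) (P : {mpoly K[n]}) k : P != 0 ->
  msize (P ^+ k) = (k * (msize P).-1).+1.
Proof.
move=> hP; have hs : (0 < msize P)%N.
  by rewrite lt0n msize_poly_eq0.
elim: k => [|k IH]; first by rewrite expr0 msize1 mul0n.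
rewrite exprS msizeM // ?expf_neq0 // IH.
lia.
Qed.

Theorem mainTheorem4 (p N : nat) (R : realFieldType) (K : closedFieldType)
  (abs : K -> R) (F : 'I_N -> {mpoly K[N]}) (w : K)
  (G f : 'I_N -> {mpoly K[N]}) (m : 'I_N -> nat)
  (c : 'I_N -> nat -> K) (q : 'I_N -> nat -> nat) :
  prime p -> Cp_model abs p ->
  lift_of_pth_power abs p F ->
  in_Ko abs w -> abs p%:R <= abs w -> abs w < 1 ->
  (forall i, F i = G i ^+ p + w *: f i) ->
  (forall i, poly_over_Ko abs (f i)) ->
  (forall i, (msize (f i) < msize (G i ^+ p))%N) ->
  (forall i, G i = \sum_(j < m i) c i j *: 'X_i ^+ q i j) ->
  (forall i j, (j < m i)%N -> in_Ko_not_Koo abs (c i j)) ->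
  (forall i j, (j < m i)%N -> exists k, q i j = (p ^ k)%N) ->
  (forall i j j', (j' < j)%N -> (j < m i)%N -> (q i j' < q i j)%N) ->
  restricted_lift_of_pth_power abs p F.
Proof.
move=> pr hCp hlift hw _ hw1 hF hf hsz hG hc hq hmono.
split=> // x hx.
case: hCp => h0 [hge [hM [hU _]]].
have aX : forall (y : K) n, abs (y ^+ n) = abs y ^+ n by move=> y n; apply: absX.
have adom : forall a b : K, abs b < abs a -> abs (a + b) = abs a.
  by move=> a b; apply: abs_dom.
have aprod : forall (r : seq 'I_N) (F : 'I_N -> K),
    abs (\prod_(i <- r) F i) = \prod_(i <- r) abs (F i).
  by move=> r0 F0; apply: abs_prod.
have [i1 hi1] : exists i, 1 < abs (x i).
  case: (pickP (fun i => 1 < abs (x i))) => [i hi | hnone]; first by exists i.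
  by exfalso; apply: hx => i; rewrite /in_Ko leNgt; have := hnone i => /= ->.
set r := vnorm abs x.
have hxr : forall i, abs (x i) <= r.
  by move=> i; apply: bigmax_ge => //; rewrite mem_index_enum.
have hr1 : 1 < r by apply: lt_le_trans hi1 (hxr i1).
have [i0 hi0] : exists i0, abs (x i0) = r.
  case: (@bigmax_ex R _ (fun i => abs (x i)) (index_enum 'I_N)) => [e|[i _ e]].
    by move: hr1; rewrite /r /vnorm e ltr10.
  by exists i; rewrite /r /vnorm e.
have hp1 : (1 < p)%N by apply: prime_gt1.
have hGp0 : G i0 ^+ p != 0.
  by apply/eqP => e; move: (hsz i0); rewrite e msize0.
have hG0 : G i0 != 0.
    apply: contraNneq hGp0 => ->; rewrite expr0n.
  by have -> : (p == 0%N) = false by apply/eqP => e; rewrite e in hp1.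
set M := m i0.
have hm : (0 < M)%N.
  move: hG0; rewrite hG /M; case: (m i0) => //; by rewrite big_ord0 eqxx.
set Q := q i0 M.-1.
have hQ0 : (0 < Q)%N.
  have [k hk] := hq i0 M.-1 (ltac:(by rewrite ltn_predL)).
  by rewrite /Q hk expn_gt0 prime_gt0.
have hqQ : forall j, (j < M)%N -> (q i0 j <= Q)%N.
  move=> j hj; rewrite /Q; case: (ltngtP j M.-1) => [h||->] //.
    by apply: ltnW; apply: hmono => //; by rewrite ltn_predL.
  by move=> h; lia.
have hc1 : forall j, (j < M)%N -> abs (c i0 j) = 1.
  move=> j hj; have [h1 h2] := hc i0 j hj.
  by apply/eqP; rewrite eq_le h1 leNgt; apply/negP.
have hGx : (G i0).@[x] = \sum_(0 <= j < M) c i0 j * x i0 ^+ q i0 j.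
  rewrite hG (big_morph (meval x) (mevalD x) (meval0 x)) big_mkord; apply: eq_bigr => j _.
  by rewrite mevalZ rmorphXn /= mevalXU.
have habsG : abs (G i0).@[x] = r ^+ Q.
  have hcj : forall j, (j < M)%N -> abs (c i0 j * x i0 ^+ q i0 j) = r ^+ q i0 j.
    by move=> j hj; rewrite hM aX hi0 hc1 // mul1r.
  suff H : forall k, (0 < k <= M)%N ->
      abs (\sum_(0 <= j < k) c i0 j * x i0 ^+ q i0 j) = r ^+ q i0 k.-1.
    by rewrite hGx H ?hm ?leqnn.
  elim=> [//|k IH] /andP [_ hk]; rewrite big_nat_recr //=.
  case: k IH hk => [|k] IH hk.
    by rewrite big_geq // add0r; apply: hcj.
  rewrite addrC adom hcj //.
  rewrite IH /=; last by rewrite ltnW.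
  by rewrite ltr_eXn2l //; apply: hmono.
have hr0 : 0 <= r by apply: ltW; apply: lt_trans ltr01 hr1.
have hszG : (msize (G i0) <= Q.+1)%N.
  rewrite hG; apply: leq_trans (msize_sum _ _ _) _.
  apply/bigmax_leqP => j _.
  apply: leq_trans (msizeZ_le _ _) _.
  by rewrite mpolyXn msizeX mdegMn mdeg1 mul1n ltnS; apply: hqQ.
have hszGp := @msizeXn N K (G i0) p hG0.
have hmdeg : forall mm, mm \in msupp (f i0) -> (mdeg mm <= (p * Q).-1)%N.
  move=> mm hmm; have h1 := msize_mdeg_lt hmm; have h2 := hsz i0.
  rewrite hszGp in h2.
  have h3 : (p * (msize (G i0)).-1 <= p * Q)%N.
    by rewrite leq_mul2l; apply/orP; right; lia.
  have h4 : (msize (f i0) <= p * (msize (G i0)).-1)%N by rewrite -ltnS.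
  move: (leq_trans h1 (leq_trans h4 h3)); case: (p * Q)%N => //.
have habsf : abs (f i0).@[x] <= r ^+ (p * Q).-1.
  rewrite mevalE big_seq; apply: abs_sum_le => // [|mm hmm].
    exact: exprn_ge0.
  rewrite hM aprod -[X in _ <= X]mul1r; apply: ler_pM => //.
    by apply: prodr_ge0 => i _.
    exact: hf.
  apply: le_trans (_ : \prod_(i < N) r ^+ mm i <= _).
    apply: ler_prod => i _; rewrite aX exprn_ge0 //=.
    by apply: lerXn2r; rewrite ?nnegrE.
  by rewrite prodrXr -mdegE ler_eXn2l //; apply: hmdeg.
have hpQ : (1 < p * Q)%N by nia.
have hlt : abs (w * (f i0).@[x]) < abs ((G i0).@[x] ^+ p).
  rewrite hM aX habsG -exprM mulnC.
  apply: le_lt_trans (_ : abs w * abs (f i0).@[x] <= abs (f i0).@[x]) _.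
    by apply: ler_piMl.
  apply: le_lt_trans habsf _; rewrite ltr_eXn2l //; lia.
have habsF : abs (F i0).@[x] = r ^+ (p * Q).
  rewrite hF mevalD mevalZ rmorphXn /= adom //.
  by rewrite aX habsG -exprM mulnC.
have hrpos : r < r ^+ (p * Q) by rewrite ltr_eXnr.
split.
  move=> h; have := h i0; rewrite /in_Ko /eval_map habsF => h'.
  have : 1 < r ^+ (p * Q) by apply: lt_trans hr1 hrpos.
  by rewrite ltNge h'.
apply: lt_le_trans hrpos _; rewrite -habsF.
have := @bigmax_ge R _ (fun i => abs (eval_map F x i)) (index_enum 'I_N) i0 (fun j => hge _) (mem_index_enum _).
by [].
Qed.
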